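(* Let $\hookrightarrow$ and $\simeq$ be as in the context. Then: (1) $\hookrightarrow$ is confluent; (2) for all terms $M, N, N'$, if $M \simeq N$ and $N \hookrightarrow N'$, then there is a term $M'$ with $M \hookrightarrow M'$ and $M' \simeq N'$; (3) for all terms $M, N$, if $M \equiv N$ then there are terms $M', N'$ with $M \hookrightarrow^* M'$, $N \hookrightarrow^* N'$ and $M' \simeq N'$.
   Context: Terms are given by $M, N, A, B ::= x \mid c \mid M\,N \mid \lambda x : A.\,M \mid \Pi x : A.\,B \mid \mathbf{Type} \mid \mathbf{Kind}$, with $x$ ranging over variables and $c$ over constants. The constants include $Level, \mathtt{z}, \mathtt{s}, \sqcup$ (written infix), $U, El, u, \pi$. Level expressions are terms generated by $l ::= i \mid \mathtt{z} \mid \mathtt{s}\,l \mid l \sqcup l'$ where $i$ ranges over a distinguished infinite set $\mathcal{I}$ of level variables; level variables may only be substituted by level expressions. Fix a signature containing definitions $c : A := M$. The one-step reduction $\hookrightarrow$ is the closure under contexts (and, for the rewrite rules, substitutions) of: $\beta$-reduction $(\lambda x : A.\,M)\,N \hookrightarrow M\{N/x\}$; the rewrite rules $El~i'~(u~i) \hookrightarrow U~i$ and $El~i'~(\pi~i_A~i_B~A~B) \hookrightarrow \Pi x : El~i_A~A.\, El~i_B~(B~x)$; and $\delta$-rules $c \hookrightarrow M$ for each definition $c : A := M$ in the signature. $\hookrightarrow^*$ is its reflexive-transitive closure. The relation $\simeq$ on terms is the smallest congruence (reflexive, symmetric, transitive, closed under all term constructors and under substitution, with level variables instantiated only by levels)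 containing the level equations $i_1 \sqcup (i_2 \sqcup i_3) \approx (i_1 \sqcup i_2) \sqcup i_3$, $i_1 \sqcup i_2 \approx i_2 \sqcup i_1$, $\mathtt{s}\,(i_1 \sqcup i_2) \approx \mathtt{s}\,i_1 \sqcup \mathtt{s}\,i_2$, $i \sqcup \mathtt{s}\,i \approx \mathtt{s}\,i$, $i \sqcup \mathtt{z} \approx i$, $i \sqcup i \approx i$. $\equiv$ is the reflexive, symmetric, transitive closure of $\hookrightarrow \cup \simeq$. *)

(* Defs.v *)
(* Untyped terms of the lambda-Pi calculus modulo rewriting
   with universe levels, de Bruijn representation with TWO sorts of
   variables: ordinary variables and level variables (the set I). *)
From Stdlib Require Import Arith Relations.

(* Constants: the built-in ones of the paper, plus other constants CDef n
   (which may or may not carry a definition in the signature). *)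
Inductive const : Type :=
  | CLevel | Cz | Cs | Cmax | CU | CEl | Cu | Cpi
  | CDef (n : nat).

Inductive vkind : Type := Ord | Lev.

Definition vkind_eqb (k k' : vkind) : bool :=
  match k, k' with
  | Ord, Ord => true
  | Lev, Lev => true
  | _, _ => false
  end.

Inductive term : Type :=
  | Var (n : nat)
  | LVar (n : nat)
  | Const (c : const)
  | App (M N : term)
  | Lam (k : vkind) (A M : term)   (* binds index 0 of sort k in M *)
  | Pi (k : vkind) (A B : term)    (* binds index 0 of sort k in B *)
  | TypeS
  | KindS.

Definition bump (k k' : vkind) (d : nat) : nat :=
  if vkind_eqb k k' then S d else d.

Fixpoint lift (k : vkind) (d : nat) (M : term) : term :=
  match M with
  | Var n => match k with
             | Ord => if Nat.ltb n d then Var n else Var (S n)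
             | Lev => Var n
             end
  | LVar n => match k with
              | Lev => if Nat.ltb n d then LVar n else LVar (S n)
              | Ord => LVar n
              end
  | Const c => Const c
  | App P Q => App (lift k d P) (lift k d Q)
  | Lam k' A P => Lam k' (lift k d A) (lift k (bump k k' d) P)
  | Pi k' A B => Pi k' (lift k d A) (lift k (bump k k' d) B)
  | TypeS => TypeS
  | KindS => KindS
  end.

Fixpoint subst (k : vkind) (d : nat) (N : term) (M : term) : term :=
  match M with
  | Var n => match k with
             | Ord => if Nat.ltb n d then Var n
                      else if Nat.eqb n d then N else Var (pred n)
             | Lev => Var n
             end
  | LVar n => match k with
              | Lev => if Nat.ltb n d then LVar n
                       else if Nat.eqb n d then N else LVar (pred n)
              | Ord => LVar n
              end
  | Const c => Const c
  | App P Q => App (subst k d N P) (subst k d N Q)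
  | Lam k' A P => Lam k' (subst k d N A) (subst k (bump k k' d) (lift k' 0 N) P)
  | Pi k' A B => Pi k' (subst k d N A) (subst k (bump k k' d) (lift k' 0 N) B)
  | TypeS => TypeS
  | KindS => KindS
  end.

Fixpoint closed_at (o l : nat) (M : term) : bool :=
  match M with
  | Var n => Nat.ltb n o
  | LVar n => Nat.ltb n l
  | Const _ => true
  | App P Q => closed_at o l P && closed_at o l Q
  | Lam Ord A P => closed_at o l A && closed_at (S o) l P
  | Lam Lev A P => closed_at o l A && closed_at o (S l) P
  | Pi Ord A B => closed_at o l A && closed_at (S o) l B
  | Pi Lev A B => closed_at o l A && closed_at o (S l) B
  | TypeS => true
  | KindS => true
  end.

Definition closed (M : term) : Prop := closed_at 0 0 M = true.

Definition tz : term := Const Cz.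
Definition ts (l : term) : term := App (Const Cs) l.
Definition tmax (l l' : term) : term := App (App (Const Cmax) l) l'.
Definition tU (l : term) : term := App (Const CU) l.
Definition tEl (l A : term) : term := App (App (Const CEl) l) A.
Definition tu (l : term) : term := App (Const Cu) l.
Definition tpi (lA lB A B : term) : term :=
  App (App (App (App (Const Cpi) lA) lB) A) B.

Inductive is_level : term -> Prop :=
  | lv_var i : is_level (LVar i)
  | lv_z : is_level tz
  | lv_s l : is_level l -> is_level (ts l)
  | lv_max l l' : is_level l -> is_level l' -> is_level (tmax l l').

(* A signature: CDef n has definition  CDef n : A := M  iff sig n = Some (A, M). *)
Definition signature := nat -> option (term * term).

(* One-step reduction  ↪  (beta, the two rewrite rules, delta),
   closed under contexts; rewrite rules closed under substitution with
   level variables instantiated by level expressions only. *)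
Inductive red1 (sig : signature) : term -> term -> Prop :=
  | r_beta_ord A M N :
      red1 sig (App (Lam Ord A M) N) (subst Ord 0 N M)
  | r_beta_lev A M l : is_level l ->
      red1 sig (App (Lam Lev A M) l) (subst Lev 0 l M)
  | r_El_u l' l : is_level l' -> is_level l ->
      red1 sig (tEl l' (tu l)) (tU l)
  | r_El_pi l' lA lB A B : is_level l' -> is_level lA -> is_level lB ->
      red1 sig (tEl l' (tpi lA lB A B))
        (Pi Ord (tEl lA A) (tEl (lift Ord 0 lB) (App (lift Ord 0 B) (Var 0))))
  | r_delta n A M : sig n = Some (A, M) ->
      red1 sig (Const (CDef n)) M
  | r_appl M M' N : red1 sig M M' -> red1 sig (App M N) (App M' N)
  | r_appr M N N' : red1 sig N N' -> red1 sig (App M N) (App M N')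
  | r_lam_ty k A A' M : red1 sig A A' -> red1 sig (Lam k A M) (Lam k A' M)
  | r_lam_bd k A M M' : red1 sig M M' -> red1 sig (Lam k A M) (Lam k A M')
  | r_pi_ty k A A' B : red1 sig A A' -> red1 sig (Pi k A B) (Pi k A' B)
  | r_pi_bd k A B B' : red1 sig B B' -> red1 sig (Pi k A B) (Pi k A B').

Definition red_star (sig : signature) : term -> term -> Prop :=
  clos_refl_trans term (red1 sig).

Definition confluent (R : term -> term -> Prop) : Prop :=
  forall M N1 N2, clos_refl_trans term R M N1 -> clos_refl_trans term R M N2 ->
    exists P, clos_refl_trans term R N1 P /\ clos_refl_trans term R N2 P.

(* ≃ : smallest congruence containing the level equations, closed under
   substitution of level variables by level expressions (the equations are
   taken with arbitrary level expressions for i, i1, i2, i3). *)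
Inductive lvl_eq : term -> term -> Prop :=
  | le_assoc l1 l2 l3 : is_level l1 -> is_level l2 -> is_level l3 ->
      lvl_eq (tmax l1 (tmax l2 l3)) (tmax (tmax l1 l2) l3)
  | le_comm l1 l2 : is_level l1 -> is_level l2 ->
      lvl_eq (tmax l1 l2) (tmax l2 l1)
  | le_sdist l1 l2 : is_level l1 -> is_level l2 ->
      lvl_eq (ts (tmax l1 l2)) (tmax (ts l1) (ts l2))
  | le_ssub l : is_level l -> lvl_eq (tmax l (ts l)) (ts l)
  | le_zero l : is_level l -> lvl_eq (tmax l tz) l
  | le_idem l : is_level l -> lvl_eq (tmax l l) l
  | le_refl M : lvl_eq M M
  | le_sym M N : lvl_eq M N -> lvl_eq N M
  | le_trans M N P : lvl_eq M N -> lvl_eq N P -> lvl_eq M P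
  | le_app M M' N N' : lvl_eq M M' -> lvl_eq N N' -> lvl_eq (App M N) (App M' N')
  | le_lam k A A' M M' : lvl_eq A A' -> lvl_eq M M' -> lvl_eq (Lam k A M) (Lam k A' M')
  | le_pi k A A' B B' : lvl_eq A A' -> lvl_eq B B' -> lvl_eq (Pi k A B) (Pi k A' B').

Definition conv (sig : signature) : term -> term -> Prop :=
  clos_refl_sym_trans term (fun M N => red1 sig M N \/ lvl_eq M N).

(* Main.v *)
Require Import Defs.
From Stdlib Require Import Arith Lia Relations Bool.


Ltac kcase := repeat match goal with
  | H : ?a = ?a -> _ |- _ => specialize (H eq_refl)
  | H : Ord = Lev -> _ |- _ => clear H
  | H : Lev = Ord -> _ |- _ => clear H end.
Ltac ltbs := repeat (cbn [lift subst bump vkind_eqb Nat.pred] in *; match goal with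
  | |- context[Nat.ltb ?a ?b] => destruct (Nat.ltb_spec a b)
  | |- context[Nat.eqb ?a ?b] => destruct (Nat.eqb_spec a b) end).
Ltac fin := cbn [lift subst bump vkind_eqb Nat.pred] in *; try reflexivity; try (exfalso; lia); try (f_equal; lia).

Lemma bump_comm x y z w : bump x y (bump x z w) = bump x z (bump x y w).
Proof. destruct x, y, z; reflexivity. Qed.

Ltac bcond := intros; subst; repeat match goal with k : vkind |- _ => destruct k end; cbn [bump vkind_eqb] in *; kcase; try discriminate; lia.

Lemma lift_lift : forall M k k' c e, (k = k' -> e <= c) ->
  lift k (bump k k' c) (lift k' e M) = lift k' e (lift k c M).
Proof.
  induction M as [n|n|cc|M1 IHM1 M2 IHM2|kk M1 IHM1 M2 IHM2|kk M1 IHM1 M2 IHM2| |]; intros k k' c e H.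
  - destruct k, k'; kcase; ltbs; fin.
  - destruct k, k'; kcase; ltbs; fin.
  - reflexivity.
  - simpl; f_equal; auto.
  - simpl; f_equal; auto. rewrite bump_comm. apply IHM2. bcond.
  - simpl; f_equal; auto. rewrite bump_comm. apply IHM2. bcond.
  - reflexivity.
  - reflexivity.
Qed.

Lemma subst_lift : forall M k e X, subst k e X (lift k e M) = M.
Proof.
  induction M as [n|n|cc|M1 IHM1 M2 IHM2|kk M1 IHM1 M2 IHM2|kk M1 IHM1 M2 IHM2| |]; intros k e X.
  - destruct k; ltbs; fin.
  - destruct k; ltbs; fin.
  - reflexivity.
  - simpl; f_equal; auto.
  - simpl; f_equal; auto.
  - simpl; f_equal; auto.
  - reflexivity.
  - reflexivity.
Qed.

Lemma lift_subst : forall Q k k'' c d N, (k'' = k -> c <= d) ->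
  lift k'' c (subst k d N Q) = subst k (bump k k'' d) (lift k'' c N) (lift k'' c Q).
Proof.
  induction Q as [n|n|cc|M1 IHQ1 M2 IHQ2|kk M1 IHQ1 M2 IHQ2|kk M1 IHQ1 M2 IHQ2| |]; intros k k'' c d N H.
  - destruct k, k''; kcase; ltbs; fin.
  - destruct k, k''; kcase; ltbs; fin.
  - reflexivity.
  - simpl; f_equal; auto.
  - simpl; f_equal; auto. rewrite IHQ2 by bcond. rewrite bump_comm. f_equal.
    apply lift_lift. bcond.
  - simpl; f_equal; auto. rewrite IHQ2 by bcond. rewrite bump_comm. f_equal.
    apply lift_lift. bcond.
  - reflexivity.
  - reflexivity.
Qed.

Lemma lift_subst2 : forall Q k k'' c d N, (k'' = k -> d <= c) ->
  lift k'' c (subst k d N Q) = subst k d (lift k'' c N) (lift k'' (bump k'' k c) Q).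
Proof.
  induction Q as [n|n|cc|M1 IHQ1 M2 IHQ2|kk M1 IHQ1 M2 IHQ2|kk M1 IHQ1 M2 IHQ2| |]; intros k k'' c d N H.
  - destruct k, k''; kcase; ltbs; fin.
  - destruct k, k''; kcase; ltbs; fin.
  - reflexivity.
  - simpl; f_equal; auto.
  - simpl; f_equal; auto. rewrite IHQ2 by bcond. rewrite bump_comm. f_equal.
    apply lift_lift. bcond.
  - simpl; f_equal; auto. rewrite IHQ2 by bcond. rewrite bump_comm. f_equal.
    apply lift_lift. bcond.
  - reflexivity.
  - reflexivity.
Qed.

Lemma subst_subst : forall P k k' d e N Q, (k = k' -> e <= d) ->
  subst k d N (subst k' e Q P) =
  subst k' e (subst k d N Q) (subst k (bump k k' d) (lift k' e N) P).
Proof.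
  induction P as [n|n|cc|M1 IHP1 M2 IHP2|kk M1 IHP1 M2 IHP2|kk M1 IHP1 M2 IHP2| |]; intros k k' d e N Q H.
  - destruct k, k'; kcase; ltbs; fin; rewrite subst_lift; reflexivity.
  - destruct k, k'; kcase; ltbs; fin; rewrite subst_lift; reflexivity.
  - reflexivity.
  - simpl; f_equal; auto.
  - simpl; f_equal; auto. rewrite IHP2 by bcond. f_equal.
    + symmetry; apply lift_subst. bcond.
    + rewrite bump_comm. f_equal. apply lift_lift. bcond.
  - simpl; f_equal; auto. rewrite IHP2 by bcond. f_equal.
    + symmetry; apply lift_subst. bcond.
    + rewrite bump_comm. f_equal. apply lift_lift. bcond.
  - reflexivity.
  - reflexivity.
Qed.

Lemma closed_lift : forall M o l k c, closed_at o l M = true ->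
  (k = Ord -> o <= c) -> (k = Lev -> l <= c) -> lift k c M = M.
Proof.
  induction M as [n|n|cc|M1 IHM1 M2 IHM2|kk M1 IHM1 M2 IHM2|kk M1 IHM1 M2 IHM2| |]; intros o l k c Hc H1 H2; simpl in Hc.
  - apply Nat.ltb_lt in Hc. destruct k; kcase; ltbs; fin.
  - apply Nat.ltb_lt in Hc. destruct k; kcase; ltbs; fin.
  - reflexivity.
  - apply andb_prop in Hc as [? ?]. simpl; f_equal; eauto.
  - destruct kk; apply andb_prop in Hc as [? ?]; simpl; f_equal; eauto;
    [eapply IHM2|eapply IHM2]; eauto; unfold bump; destruct k; simpl; intros; kcase; try lia; discriminate.
  - destruct kk; apply andb_prop in Hc as [? ?]; simpl; f_equal; eauto;
    [eapply IHM2|eapply IHM2]; eauto; unfold bump; destruct k; simpl; intros; kcase; try lia; discriminate.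
  - reflexivity.
  - reflexivity.
Qed.

Lemma closed_subst : forall M o l k c N, closed_at o l M = true ->
  (k = Ord -> o <= c) -> (k = Lev -> l <= c) -> subst k c N M = M.
Proof.
  induction M as [n|n|cc|M1 IHM1 M2 IHM2|kk M1 IHM1 M2 IHM2|kk M1 IHM1 M2 IHM2| |];
  intros o l k c N Hc H1 H2; simpl in Hc.
  - apply Nat.ltb_lt in Hc. destruct k; kcase; ltbs; fin.
  - apply Nat.ltb_lt in Hc. destruct k; kcase; ltbs; fin.
  - reflexivity.
  - apply andb_prop in Hc as [? ?]. simpl; f_equal; eauto.
  - destruct kk; apply andb_prop in Hc as [? ?]; simpl; f_equal; eauto;
    [eapply IHM2|eapply IHM2]; eauto; unfold bump; destruct k; simpl; intros; kcase; try lia; discriminate.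
  - destruct kk; apply andb_prop in Hc as [? ?]; simpl; f_equal; eauto;
    [eapply IHM2|eapply IHM2]; eauto; unfold bump; destruct k; simpl; intros; kcase; try lia; discriminate.
  - reflexivity.
  - reflexivity.
Qed.

Lemma closed_lift0 M k c : closed M -> lift k c M = M.
Proof. intros H; eapply closed_lift; eauto; lia. Qed.
Lemma closed_subst0 M k c N : closed M -> subst k c N M = M.
Proof. intros H; eapply closed_subst; eauto; lia. Qed.

Lemma lift_level l k c : is_level l -> is_level (lift k c l).
Proof.
  induction 1.
  - destruct k; cbn [lift]; [constructor| destruct (i <? c); constructor].
  - constructor.
  - unfold ts; cbn [lift]; apply (lv_s (lift k c l)); auto.
  - unfold tmax; cbn [lift]; apply (lv_max (lift k c l) (lift k c l')); auto.
Qed.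

Lemma subst_ord_level l d N : is_level l -> subst Ord d N l = l.
Proof. induction 1; unfold tz, ts, tmax in *; cbn [subst]; congruence. Qed.

Lemma lift_ord_level l c : is_level l -> lift Ord c l = l.
Proof. induction 1; unfold tz, ts, tmax in *; cbn [lift]; congruence. Qed.

Lemma subst_level l k d N : is_level l -> (k = Lev -> is_level N) -> is_level (subst k d N l).
Proof.
  intros H HN; destruct k. { rewrite subst_ord_level; auto. }
  specialize (HN eq_refl).
  induction H.
  - cbn [subst]. destruct (i <? d); [constructor|]. destruct (i =? d); auto; constructor.
  - constructor.
  - unfold ts; cbn [subst]; apply (lv_s (subst Lev d N l)); auto.
  - unfold tmax; cbn [subst]; apply (lv_max (subst Lev d N l) (subst Lev d N l')); auto.
Qed.


Inductive par (sig : signature) : term -> term -> Prop :=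
  | p_var n : par sig (Var n) (Var n)
  | p_lvar n : par sig (LVar n) (LVar n)
  | p_const c : par sig (Const c) (Const c)
  | p_type : par sig TypeS TypeS
  | p_kind : par sig KindS KindS
  | p_app M M' N N' : par sig M M' -> par sig N N' -> par sig (App M N) (App M' N')
  | p_lam k A A' M M' : par sig A A' -> par sig M M' -> par sig (Lam k A M) (Lam k A' M')
  | p_pi k A A' M M' : par sig A A' -> par sig M M' -> par sig (Pi k A M) (Pi k A' M')
  | p_beta_ord A M M' N N' : par sig M M' -> par sig N N' ->
      par sig (App (Lam Ord A M) N) (subst Ord 0 N' M')
  | p_beta_lev A M M' l : par sig M M' -> is_level l ->
      par sig (App (Lam Lev A M) l) (subst Lev 0 l M')
  | p_El_u l' l : is_level l' -> is_level l -> par sig (tEl l' (tu l)) (tU l)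
  | p_El_pi l' lA lB A A' B B' : is_level l' -> is_level lA -> is_level lB ->
      par sig A A' -> par sig B B' ->
      par sig (tEl l' (tpi lA lB A B))
        (Pi Ord (tEl lA A') (tEl (lift Ord 0 lB) (App (lift Ord 0 B') (Var 0))))
  | p_delta n A M : sig n = Some (A, M) -> par sig (Const (CDef n)) M.

Lemma par_refl sig M : par sig M M.
Proof. induction M; constructor; auto. Qed.

Lemma par_level sig l X : is_level l -> par sig l X -> X = l.
Proof.
  intros H; revert X; induction H; intros X HX; unfold tz, ts, tmax in *.
  - inversion HX; auto.
  - inversion HX; auto.
  - inversion HX; subst. inversion H2; subst. f_equal. auto.
  - inversion HX; subst. inversion H3; subst. inversion H4; subst. f_equal; [f_equal|]; auto.
Qed.



Lemma par_lift sig (Hs : forall n A M, sig n = Some (A, M) -> closed M) :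
  forall M M', par sig M M' -> forall kk cc, par sig (lift kk cc M) (lift kk cc M').
Proof.
  induction 1; intros kk cc; cbn [lift].
  - destruct kk; [destruct (n <? cc)|]; constructor.
  - destruct kk; [|destruct (n <? cc)]; constructor.
  - constructor.
  - constructor.
  - constructor.
  - constructor; auto.
  - constructor; auto.
  - constructor; auto.
  - rewrite lift_subst2 by (intros; subst; lia).
    apply p_beta_ord; auto.
  - rewrite lift_subst2 by (intros; subst; lia).
    apply p_beta_lev; auto. apply lift_level; auto.
  - apply p_El_u; apply lift_level; auto.
  - pose proof (lift_lift lB kk Ord cc 0 ltac:(intros; lia)) as E1.
    pose proof (lift_lift B' kk Ord cc 0 ltac:(intros; lia)) as E2.
    pose proof (p_El_pi sig (lift kk cc l') (lift kk cc lA) (lift kk cc lB) _ _ _ _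
      (lift_level _ kk cc H) (lift_level _ kk cc H0) (lift_level _ kk cc H1)
      (IHpar1 kk cc) (IHpar2 kk cc)) as HP.
    destruct kk; simpl in *; rewrite E1, E2; exact HP.
  - rewrite closed_lift0 by eauto. econstructor; eauto.
Qed.

Lemma subst_level_eq sig k d N N' l : is_level l -> par sig N N' ->
  (k = Lev -> is_level N) -> subst k d N' l = subst k d N l.
Proof.
  intros Hl Hp HN. destruct k.
  - rewrite !subst_ord_level; auto.
  - rewrite (par_level sig N N'); auto.
Qed.

Lemma par_subst sig (Hs : forall n A M, sig n = Some (A, M) -> closed M) :
  forall M M', par sig M M' -> forall kx dx N N', par sig N N' ->
  (kx = Lev -> is_level N) -> par sig (subst kx dx N M) (subst kx dx N' M').
Proof.
  induction 1; intros kx dx N1 N1' HN HL.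
  - destruct kx; cbn [subst]; [|constructor].
    destruct (n <? dx); [constructor|]. destruct (n =? dx); [auto|constructor].
  - destruct kx; cbn [subst]; [constructor|].
    destruct (n <? dx); [constructor|]. destruct (n =? dx); [auto|constructor].
  - constructor.
  - constructor.
  - constructor.
  - cbn [subst]; constructor; auto.
  - cbn [subst]; constructor; auto. apply IHpar2. apply par_lift; auto.
    intros; apply lift_level; auto.
  - cbn [subst]; constructor; auto. apply IHpar2. apply par_lift; auto.
    intros; apply lift_level; auto.
  - rewrite subst_subst by bcond. cbn [subst].
    apply p_beta_ord; auto. apply IHpar1. apply par_lift; auto.
    intros; apply lift_level; auto.
  - rewrite subst_subst by bcond. cbn [subst].
    rewrite (subst_level_eq sig kx dx N1 N1' l); auto.
    apply p_beta_lev; auto. apply IHpar. apply par_lift; auto.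
    intros; apply lift_level; auto. apply subst_level; auto.
  - unfold tEl, tu, tU; cbn [subst].
    rewrite (subst_level_eq sig kx dx N1 N1' l); auto.
    apply (p_El_u sig (subst kx dx N1 l') (subst kx dx N1 l)); apply subst_level; auto.
  - pose proof (lift_subst lB kx Ord 0 dx N1' ltac:(intros; lia)) as E1.
    pose proof (lift_subst B' kx Ord 0 dx N1' ltac:(intros; lia)) as E2.
    rewrite (subst_level_eq sig kx dx N1 N1' lB) in E1 by auto.
    pose proof (p_El_pi sig (subst kx dx N1 l') (subst kx dx N1 lA) (subst kx dx N1 lB) _ _ _ _
      (subst_level _ kx dx N1 H HL) (subst_level _ kx dx N1 H0 HL) (subst_level _ kx dx N1 H1 HL)
      (IHpar1 kx dx N1 N1' HN HL) (IHpar2 kx dx N1 N1' HN HL)) as HP.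
    destruct kx; simpl in *; rewrite <- E1, <- E2; [rewrite (subst_level_eq sig Ord dx N1 N1' lA) | rewrite (subst_level_eq sig Lev dx N1 N1' lA)]; try exact HP; auto.
  - cbn [subst]. rewrite closed_subst0 by eauto. econstructor; eauto.
Qed.


Open Scope bool_scope.
Fixpoint levb (M : term) : bool :=
  match M with
  | LVar _ => true
  | Const Cz => true
  | App (Const Cs) l => levb l
  | App (App (Const Cmax) l) l' => levb l && levb l'
  | _ => false
  end.

Lemma levb_true : forall M, levb M = true -> is_level M.
Proof.
  fix IH 1; intros M H; destruct M as [| |c|M1 M2| | | |]; try discriminate.
  - constructor.
  - destruct c; try discriminate; constructor.
  - destruct M1 as [| |c|M11 M12| | | |]; try discriminate.
    + destruct c; try discriminate. apply (lv_s M2). apply IH; exact H.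
    + destruct M11 as [| |c| | | | |]; try discriminate. destruct c; try discriminate.
      apply andb_prop in H as [H1 H2]. apply (lv_max M12 M2); apply IH; assumption.
Qed.

Lemma levb_is l : is_level l -> levb l = true.
Proof. induction 1; simpl; auto. rewrite IHis_level1, IHis_level2; reflexivity. Qed.

Definition el_red (Q rQ dflt : term) : term :=
  match Q with
  | App (Const Cu) l => if levb l then tU l else dflt
  | App (App (App (App (Const Cpi) lA) lB) _) _ =>
      if levb lA && levb lB then
        match rQ with
        | App (App _ rA) rB =>
            Pi Ord (tEl lA rA) (tEl (lift Ord 0 lB) (App (lift Ord 0 rB) (Var 0)))
        | _ => dflt
        end
      else dflt
  | _ => dflt
  end.

Definition rho_app (P Q rP rQ : term) : term :=
  match P with
  | Lam Ord _ _ => match rP with Lam _ _ b => subst Ord 0 rQ b | _ => App rP rQ end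
  | Lam Lev _ _ => if levb Q then
                     match rP with Lam _ _ b => subst Lev 0 Q b | _ => App rP rQ end
                   else App rP rQ
  | App (Const CEl) l' => if levb l' then el_red Q rQ (App rP rQ) else App rP rQ
  | _ => App rP rQ
  end.

Fixpoint rho (sig : signature) (M : term) : term :=
  match M with
  | Const (CDef n) => match sig n with Some (_, B) => B | None => Const (CDef n) end
  | App P Q => rho_app P Q (rho sig P) (rho sig Q)
  | Lam k A P => Lam k (rho sig A) (rho sig P)
  | Pi k A B => Pi k (rho sig A) (rho sig B)
  | _ => M
  end.

Ltac lr := left; simpl; repeat (match goal with H : levb _ = _ |- _ => rewrite H; clear H end); reflexivity.

Lemma el_red_cases Q rQ d :
  el_red Q rQ d = d \/
  (exists l, Q = tu l /\ is_level l /\ el_red Q rQ d = tU l) \/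
  (exists lA lB A B X rA rB, Q = tpi lA lB A B /\ is_level lA /\ is_level lB /\
     rQ = App (App X rA) rB /\
     el_red Q rQ d = Pi Ord (tEl lA rA) (tEl (lift Ord 0 lB) (App (lift Ord 0 rB) (Var 0)))).
Proof.
  destruct Q as [| | |Q1 Q2| | | |]; try (lr).
  destruct Q1 as [| |c|Q11 Q12| | | |]; try (lr).
  - destruct c; try (lr).
    destruct (levb Q2) eqn:E; [|lr].
    right; left. exists Q2; split; [reflexivity|split; [apply levb_true; auto|]].
    simpl. rewrite E. reflexivity.
  - destruct Q11 as [| | |Q111 Q112| | | |]; try (lr).
    destruct Q111 as [| | |Q1111 Q1112| | | |]; try (lr).
    destruct Q1111 as [| |c| | | | |]; try (lr).
    destruct c; try (lr).
    destruct (levb Q1112) eqn:E1; [|lr].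
    destruct (levb Q112) eqn:E2; [|lr].
    destruct rQ as [| | |R1 R2| | | |]; try (lr).
    destruct R1 as [| | |R11 R12| | | |]; try (lr).
    right; right. exists Q1112, Q112, Q12, Q2, R11, R12, R2.
    repeat split; try reflexivity; try (apply levb_true; auto).
    simpl; rewrite E1, E2; reflexivity.
Qed.

Lemma rho_app_cases P Q rP rQ :
  rho_app P Q rP rQ = App rP rQ \/
  (exists A B k a b, P = Lam Ord A B /\ rP = Lam k a b /\ rho_app P Q rP rQ = subst Ord 0 rQ b) \/
  (exists A B k a b, P = Lam Lev A B /\ is_level Q /\ rP = Lam k a b /\
     rho_app P Q rP rQ = subst Lev 0 Q b) \/
  (exists l', P = App (Const CEl) l' /\ is_level l' /\
     rho_app P Q rP rQ = el_red Q rQ (App rP rQ)).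
Proof.
  destruct P as [| | |P1 P2|k A B| | |]; try (lr).
  - destruct P1 as [| |c| | | | |]; try (lr).
    destruct c; try (lr).
    destruct (levb P2) eqn:E; [|lr].
    right; right; right. exists P2. repeat split; [apply levb_true; auto|].
    simpl; rewrite E; reflexivity.
  - destruct k.
    + destruct rP as [| | | |kk a b| | |]; try (lr).
      right; left. exists A, B, kk, a, b. auto.
    + destruct (levb Q) eqn:E; [|lr].
      destruct rP as [| | | |kk a b| | |]; try (lr).
      right; right; left. exists A, B, kk, a, b. repeat split; auto.
      apply levb_true; auto. simpl; rewrite E; reflexivity.
Qed.

Lemma par_lam_inv sig k A B X : par sig (Lam k A B) X ->
  exists A' B', X = Lam k A' B' /\ par sig A A' /\ par sig B B'.
Proof. intros H; inversion H; subst; eauto. Qed.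

Lemma par_const_inv sig c X : par sig (Const c) X -> (forall n, c <> CDef n) -> X = Const c.
Proof. intros H Hc; inversion H; subst; auto. exfalso; eapply Hc; eauto. Qed.

Lemma par_app_const_inv sig c l X : par sig (App (Const c) l) X -> (forall n, c <> CDef n) ->
  is_level l -> X = App (Const c) l.
Proof.
  intros H Hc Hl; inversion H; subst.
  apply par_const_inv in H2; auto. subst. f_equal. eapply par_level; eauto.
Qed.

Lemma par_tpi_inv sig lA lB A B X : is_level lA -> is_level lB ->
  par sig (tpi lA lB A B) X ->
  exists A' B', X = tpi lA lB A' B' /\ par sig A A' /\ par sig B B'.
Proof.
  intros HA HB H; unfold tpi in H.
  inversion H as [| | | | |M1 M1' N1 N1' H1 H2| | | | | | |]; subst.
  inversion H1 as [| | | | |M2 M2' N2 N2' H3 H4| | | | | | |]; subst.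
  inversion H3 as [| | | | |M3 M3' N3 N3' H5 H6| | | | | | |]; subst.
  apply par_app_const_inv in H5; try discriminate; auto. subst.
  assert (N3' = lB) by (eapply par_level; eauto). subst.
  exists N2', N1'; unfold tpi; auto.
Qed.

Lemma par_rho sig (Hs : forall n A M, sig n = Some (A, M) -> closed M) :
  forall M N, par sig M N -> par sig N (rho sig M).
Proof.
  induction 1.
  - constructor.
  - constructor.
  - destruct c; try constructor. cbn [rho].
    destruct (sig n) as [[A B]|] eqn:E; [econstructor; eauto| constructor].
  - constructor.
  - constructor.
  - cbn [rho].
    destruct (rho_app_cases M N (rho sig M) (rho sig N)) as
      [E|[[A [B [k [a [b [E1 [E2 E3]]]]]]]|[[A [B [k [a [b [E1 [E0 [E2 E3]]]]]]]]|[l' [E1 [E2 E3]]]]]].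
    + rewrite E. constructor; auto.
    + rewrite E3. subst M. cbn [rho] in E2. injection E2 as <- <- <-.
      apply par_lam_inv in H as [A' [B' [-> [_ HB]]]].
      apply par_lam_inv in IHpar1 as [A'' [B'' [E4 [_ HB']]]]. injection E4 as <- <-.
      apply p_beta_ord; auto.
    + rewrite E3. subst M. cbn [rho] in E2. injection E2 as <- <- <-.
      apply par_lam_inv in H as [A' [B' [-> [_ HB]]]].
      apply par_lam_inv in IHpar1 as [A'' [B'' [E4 [_ HB']]]]. injection E4 as <- <-.
      rewrite (par_level sig N N'); auto.
      apply p_beta_lev; auto.
    + rewrite E3. subst M. apply par_app_const_inv in H; try discriminate; auto. subst M'.
      destruct (el_red_cases N (rho sig N) (App (rho sig (App (Const CEl) l')) (rho sig N))) as
        [F|[[l [F1 [F2 F3]]]|[lA [lB [A [B [X [rA [rB [F1 [F2 [F3 [F4 F5]]]]]]]]]]]]].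
      * rewrite F. constructor; auto.
      * rewrite F3. subst N. apply par_app_const_inv in H0; try discriminate; auto. subst N'.
        apply (p_El_u sig l' l); auto.
      * rewrite F5. subst N. apply par_tpi_inv in H0 as [A' [B' [-> [HA HB]]]]; auto.
        apply par_tpi_inv in IHpar2 as [A'' [B'' [E4 [HA' HB']]]]; auto.
        rewrite F4 in E4. unfold tpi in E4. injection E4 as _ E6 E7; subst rA rB.
        apply p_El_pi; auto.
  - cbn [rho]; constructor; auto.
  - cbn [rho]; constructor; auto.
  - cbn [rho rho_app]. apply par_subst; auto. discriminate.
  - cbn [rho rho_app]. rewrite (levb_is l H0). apply par_subst; auto. apply par_refl.
  - unfold tEl, tu, tU. cbn [rho rho_app el_red]. rewrite (levb_is l' H), (levb_is l H0).
    apply par_refl.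
  - unfold tEl, tpi. cbn [rho rho_app el_red].
    rewrite (levb_is l' H), (levb_is lA H0), (levb_is lB H1). simpl andb.
    unfold tEl. repeat constructor; auto; try apply par_refl; apply par_lift; auto.
  - cbn [rho]. rewrite H. apply par_refl.
Qed.

Lemma par_diamond sig (Hs : forall n A M, sig n = Some (A, M) -> closed M) M N1 N2 :
  par sig M N1 -> par sig M N2 -> exists P, par sig N1 P /\ par sig N2 P.
Proof. intros; exists (rho sig M); split; apply par_rho; auto. Qed.


Lemma red1_par sig M N : red1 sig M N -> par sig M N.
Proof.
  induction 1; first [ apply p_beta_ord; apply par_refl | apply p_beta_lev; auto; apply par_refl
    | apply p_El_u; auto | apply p_El_pi; auto; apply par_refl
    | solve [econstructor; eauto using par_refl] ].
Qed.

Lemma rs_app sig M M' N N' : red_star sig M M' -> red_star sig N N' ->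
  red_star sig (App M N) (App M' N').
Proof.
  intros H1 H2. apply rt_trans with (App M' N).
  - induction H1; [apply rt_step; constructor; auto|apply rt_refl|eapply rt_trans; eauto].
  - induction H2; [apply rt_step; constructor; auto|apply rt_refl|eapply rt_trans; eauto].
Qed.

Lemma rs_lam sig k M M' N N' : red_star sig M M' -> red_star sig N N' ->
  red_star sig (Lam k M N) (Lam k M' N').
Proof.
  intros H1 H2. apply rt_trans with (Lam k M' N).
  - induction H1; [apply rt_step; constructor; auto|apply rt_refl|eapply rt_trans; eauto].
  - induction H2; [apply rt_step; constructor; auto|apply rt_refl|eapply rt_trans; eauto].
Qed.

Lemma rs_pi sig k M M' N N' : red_star sig M M' -> red_star sig N N' ->
  red_star sig (Pi k M N) (Pi k M' N').
Proof.
  intros H1 H2. apply rt_trans with (Pi k M' N).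
  - induction H1; [apply rt_step; constructor; auto|apply rt_refl|eapply rt_trans; eauto].
  - induction H2; [apply rt_step; constructor; auto|apply rt_refl|eapply rt_trans; eauto].
Qed.

Lemma par_rs sig M N : par sig M N -> red_star sig M N.
Proof.
  induction 1; try apply rt_refl.
  - apply rs_app; auto.
  - apply rs_lam; auto.
  - apply rs_pi; auto.
  - eapply rt_trans. apply rs_app. apply rs_lam. apply rt_refl. eauto. eauto.
    apply rt_step. constructor.
  - eapply rt_trans. apply rs_app. apply rs_lam. apply rt_refl. eauto. apply rt_refl.
    apply rt_step. constructor; auto.
  - apply rt_step. constructor; auto.
  - eapply rt_trans. unfold tEl, tpi. apply rs_app. apply rt_refl.
    apply rs_app. apply rs_app. apply rt_refl. eauto. eauto.
    apply rt_step. constructor; auto.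
  - apply rt_step. econstructor; eauto.
Qed.

Lemma strip sig (Hs : forall n A M, sig n = Some (A, M) -> closed M) :
  forall M N2, clos_refl_trans term (par sig) M N2 -> forall N1, par sig M N1 ->
  exists P, clos_refl_trans term (par sig) N1 P /\ par sig N2 P.
Proof.
  induction 1; intros N1 HN1.
  - destruct (par_diamond sig Hs _ _ _ HN1 H) as [P [H1 H2]]. exists P; split; auto.
    apply rt_step; auto.
  - exists N1; split; auto. apply rt_refl.
  - destruct (IHclos_refl_trans1 N1 HN1) as [P1 [H1 H2]].
    destruct (IHclos_refl_trans2 P1 H2) as [P2 [H3 H4]].
    exists P2; split; auto. eapply rt_trans; eauto.
Qed.

Lemma conf_par sig (Hs : forall n A M, sig n = Some (A, M) -> closed M) :
  forall M N1, clos_refl_trans term (par sig) M N1 -> forall N2,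
  clos_refl_trans term (par sig) M N2 ->
  exists P, clos_refl_trans term (par sig) N1 P /\ clos_refl_trans term (par sig) N2 P.
Proof.
  induction 1; intros N2 HN2.
  - destruct (strip sig Hs _ _ HN2 _ H) as [P [H1 H2]]. exists P; split; auto.
    apply rt_step; auto.
  - exists N2; split; auto. apply rt_refl.
  - destruct (IHclos_refl_trans1 N2 HN2) as [P1 [H1 H2]].
    destruct (IHclos_refl_trans2 P1 H1) as [P2 [H3 H4]].
    exists P2; split; auto. eapply rt_trans; eauto.
Qed.

Lemma rs_par sig M N : red_star sig M N -> clos_refl_trans term (par sig) M N.
Proof.
  induction 1; [apply rt_step; apply red1_par; auto|apply rt_refl|eapply rt_trans; eauto].
Qed.

Lemma par_star_rs sig M N : clos_refl_trans term (par sig) M N -> red_star sig M N.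
Proof.
  induction 1; [apply par_rs; auto|apply rt_refl|eapply rt_trans; eauto].
Qed.

Lemma confluence sig (Hs : forall n A M, sig n = Some (A, M) -> closed M) :
  confluent (red1 sig).
Proof.
  intros M N1 N2 H1 H2.
  destruct (conf_par sig Hs M N1 (rs_par _ _ _ H1) N2 (rs_par _ _ _ H2)) as [P [A B]].
  exists P; split; apply par_star_rs; auto.
Qed.


Lemma lvl_eq_lift : forall A B, lvl_eq A B -> forall kx cx, lvl_eq (lift kx cx A) (lift kx cx B).
Proof.
  induction 1; intros kx cx.
  - exact (le_assoc _ _ _ (lift_level _ kx cx H) (lift_level _ kx cx H0) (lift_level _ kx cx H1)).
  - exact (le_comm _ _ (lift_level _ kx cx H) (lift_level _ kx cx H0)).
  - exact (le_sdist _ _ (lift_level _ kx cx H) (lift_level _ kx cx H0)).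
  - exact (le_ssub _ (lift_level _ kx cx H)).
  - exact (le_zero _ (lift_level _ kx cx H)).
  - exact (le_idem _ (lift_level _ kx cx H)).
  - apply le_refl.
  - apply le_sym; auto.
  - eapply le_trans; eauto.
  - apply le_app; auto.
  - apply le_lam; auto.
  - apply le_pi; auto.
Qed.

Lemma lvl_eq_subst1 : forall A B, lvl_eq A B -> forall kx dx Q, (kx = Lev -> is_level Q) ->
  lvl_eq (subst kx dx Q A) (subst kx dx Q B).
Proof.
  induction 1; intros kx dx Q HQ.
  - exact (le_assoc _ _ _ (subst_level _ kx dx Q H HQ) (subst_level _ kx dx Q H0 HQ) (subst_level _ kx dx Q H1 HQ)).
  - exact (le_comm _ _ (subst_level _ kx dx Q H HQ) (subst_level _ kx dx Q H0 HQ)).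
  - exact (le_sdist _ _ (subst_level _ kx dx Q H HQ) (subst_level _ kx dx Q H0 HQ)).
  - exact (le_ssub _ (subst_level _ kx dx Q H HQ)).
  - exact (le_zero _ (subst_level _ kx dx Q H HQ)).
  - exact (le_idem _ (subst_level _ kx dx Q H HQ)).
  - apply le_refl.
  - apply le_sym; auto.
  - eapply le_trans; eauto.
  - apply le_app; auto.
  - apply le_lam; auto. apply IHlvl_eq2. intros; apply lift_level; auto.
  - apply le_pi; auto. apply IHlvl_eq2. intros; apply lift_level; auto.
Qed.

Lemma lvl_eq_subst2 : forall X k d Q1 Q, lvl_eq Q1 Q -> lvl_eq (subst k d Q1 X) (subst k d Q X).
Proof.
  induction X as [n|n|cc|M1 IHM1 M2 IHM2|kk M1 IHM1 M2 IHM2|kk M1 IHM1 M2 IHM2| |];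
  intros k d Q1 Q H; cbn [subst]; try apply le_refl.
  - destruct k; [|apply le_refl]. destruct (n <? d); [apply le_refl|].
    destruct (n =? d); [auto|apply le_refl].
  - destruct k; [apply le_refl|]. destruct (n <? d); [apply le_refl|].
    destruct (n =? d); [auto|apply le_refl].
  - apply le_app; auto.
  - apply le_lam; auto. apply IHM2. apply lvl_eq_lift; auto.
  - apply le_pi; auto. apply IHM2. apply lvl_eq_lift; auto.
Qed.

Lemma lvl_eq_subst k d P1 P Q1 Q : lvl_eq P1 P -> lvl_eq Q1 Q -> (k = Lev -> is_level Q1) ->
  lvl_eq (subst k d Q1 P1) (subst k d Q P).
Proof.
  intros. eapply le_trans. apply lvl_eq_subst1; eauto. apply lvl_eq_subst2; auto.
Qed.

Inductive S : term -> term -> Prop :=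
  | S_lev M N : is_level M -> is_level N -> lvl_eq M N -> S M N
  | S_var n : S (Var n) (Var n)
  | S_const c : S (Const c) (Const c)
  | S_app M M' N N' : S M M' -> S N N' -> S (App M N) (App M' N')
  | S_lam k A A' M M' : S A A' -> S M M' -> S (Lam k A M) (Lam k A' M')
  | S_pi k A A' M M' : S A A' -> S M M' -> S (Pi k A M) (Pi k A' M')
  | S_type : S TypeS TypeS
  | S_kind : S KindS KindS.

Lemma S_refl M : S M M.
Proof.
  induction M.
  - apply S_var.
  - apply S_lev; constructor.
  - apply S_const.
  - apply S_app; auto.
  - apply S_lam; auto.
  - apply S_pi; auto.
  - apply S_type.
  - apply S_kind.
Qed.

Lemma S_sound M N : S M N -> lvl_eq M N.
Proof. induction 1; try apply le_refl; auto; [apply le_app|apply le_lam|apply le_pi]; auto. Qed.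

Lemma S_sym M N : S M N -> S N M.
Proof.
  induction 1; [apply S_lev; auto; apply le_sym; auto|apply S_var|apply S_const|apply S_app; auto
   |apply S_lam; auto|apply S_pi; auto|apply S_type|apply S_kind].
Qed.

Lemma S_const_inv M c : S M (Const c) -> ~ is_level (Const c) -> M = Const c.
Proof. intros H Hn; inversion H; subst; auto. contradiction. Qed.

Lemma S_app_inv M X Y : S M (App X Y) -> ~ is_level (App X Y) ->
  exists M1 M2, M = App M1 M2 /\ S M1 X /\ S M2 Y.
Proof. intros H Hn; inversion H; subst; eauto. contradiction. Qed.

Lemma S_lam_inv M k X Y : S M (Lam k X Y) -> exists M1 M2, M = Lam k M1 M2 /\ S M1 X /\ S M2 Y.
Proof. intros H; inversion H; subst; eauto. inversion H1. Qed.

Lemma S_level : forall N, is_level N -> forall M, S M N -> is_level M.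
Proof.
  induction 1; intros M HS.
  - inversion HS; auto.
  - inversion HS; auto. constructor.
  - inversion HS; subst; auto.
    match goal with Hc : S ?X (Const Cs) |- _ =>
      apply S_const_inv in Hc; [subst X|intro Hx; inversion Hx] end.
    apply lv_s; auto.
  - inversion HS; subst; auto.
    match goal with Hc : S ?X (App (Const Cmax) l) |- _ =>
      apply S_app_inv in Hc as [M1 [M2 [-> [HA HB]]]]; [|intro Hx; inversion Hx] end.
    apply S_const_inv in HA; [|intro Hc; inversion Hc]. subst.
    apply lv_max; auto.
Qed.

Lemma S_trans : forall M N, S M N -> forall P, S N P -> S M P.
Proof.
  intros M N HMN. induction HMN; intros P HNP.
  - assert (is_level P) by (apply (S_level N); auto; apply S_sym; auto).
    apply S_lev; auto. eapply le_trans; eauto. apply S_sound; auto.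
  - auto.
  - auto.
  - inversion HNP; subst.
    + apply S_lev; auto. apply (S_level (App M' N')); auto. apply S_app; auto.
      eapply le_trans; [|eauto]. apply le_app; apply S_sound; auto.
    + apply S_app; auto.
  - inversion HNP; subst. inversion H. apply S_lam; auto.
  - inversion HNP; subst. inversion H. apply S_pi; auto.
  - auto.
  - auto.
Qed.

Lemma lvl_eq_S M N : lvl_eq M N -> S M N.
Proof.
  induction 1.
  - apply S_lev; auto; repeat constructor; auto.
  - apply S_lev; auto; repeat constructor; auto.
  - apply S_lev; auto; repeat constructor; auto.
  - apply S_lev; auto; repeat constructor; auto.
  - apply S_lev; auto; repeat constructor; auto.
  - apply S_lev; auto; repeat constructor; auto.
  - apply S_refl.
  - apply S_sym; auto.
  - eapply S_trans; eauto.
  - apply S_app; auto.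
  - apply S_lam; auto.
  - apply S_pi; auto.
Qed.


Lemma level_nored sig l X : is_level l -> red1 sig l X -> False.
Proof.
  intros H; revert X; induction H; intros X HR; unfold tz, ts, tmax in *.
  - inversion HR.
  - inversion HR.
  - inversion HR; subst; eauto.
    match goal with Hr : red1 _ (Const _) _ |- _ => inversion Hr end.
  - inversion HR; subst; eauto.
    match goal with Hr : red1 _ (App (Const _) _) _ |- _ => inversion Hr; subst; eauto end.
    match goal with Hr : red1 _ (Const _) _ |- _ => inversion Hr end.
Qed.

Ltac cong := repeat first [ apply le_refl | apply le_app | apply le_pi | apply le_lam
  | apply lvl_eq_lift | (apply S_sound; assumption) ].

Ltac slev := match goal with |- is_level ?M => match goal with Hs : S M ?X |- _ => apply (S_level X); [|exact Hs]; auto end end.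

Ltac notlev := let Hx := fresh in intro Hx; inversion Hx.

Lemma comm1 sig : forall M N, S M N -> forall N', red1 sig N N' ->
  exists M', red1 sig M M' /\ lvl_eq M' N'.
Proof.
  induction 1; intros N2 HR.
  - exfalso; eapply level_nored; eauto.
  - inversion HR.
  - exists N2; split; auto. apply le_refl.
  - inversion HR; subst.
    + apply S_lam_inv in H as [A1 [P1 [-> [HA HP]]]].
      eexists; split; [apply r_beta_ord|]. apply lvl_eq_subst; try apply S_sound; auto.
      discriminate.
    + apply S_lam_inv in H as [A1 [P1 [-> [HA HP]]]].
      assert (is_level N) by slev.
      eexists; split; [apply r_beta_lev; auto|]. apply lvl_eq_subst; try apply S_sound; auto.
    + apply S_app_inv in H as [X [Y [-> [HX HY]]]]; [|notlev].
      apply S_const_inv in HX; [|notlev]. subst X.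
      apply S_app_inv in H0 as [X2 [Y2 [-> [HX2 HY2]]]]; [|notlev].
      apply S_const_inv in HX2; [|notlev]. subst X2.
      exists (tU Y2); split.
      * apply (r_El_u sig Y Y2); slev.
      * unfold tU; cong.
    + apply S_app_inv in H as [X [Y [-> [HX HY]]]]; [|notlev].
      apply S_const_inv in HX; [|notlev]. subst X.
      unfold tpi in H0.
      apply S_app_inv in H0 as [X1 [B1 [-> [HX1 HB1]]]]; [|notlev].
      apply S_app_inv in HX1 as [X2 [A1 [-> [HX2 HA1]]]]; [|notlev].
      apply S_app_inv in HX2 as [X3 [mB [-> [HX3 HmB]]]]; [|notlev].
      apply S_app_inv in HX3 as [X4 [mA [-> [HX4 HmA]]]]; [|notlev].
      apply S_const_inv in HX4; [|notlev]. subst X4.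
      exists (Pi Ord (tEl mA A1) (tEl (lift Ord 0 mB) (App (lift Ord 0 B1) (Var 0)))).
      split.
      * apply (r_El_pi sig Y mA mB A1 B1); slev.
      * unfold tEl; cong.
    + destruct (IHS1 _ H4) as [M1' [HR1 HE1]].
      exists (App M1' N); split; [apply r_appl; auto|cong; auto].
    + destruct (IHS2 _ H4) as [M1' [HR1 HE1]].
      exists (App M M1'); split; [apply r_appr; auto|cong; auto].
  - inversion HR; subst.
    + destruct (IHS1 _ H5) as [A2 [HR1 HE1]].
      exists (Lam k A2 M); split; [apply r_lam_ty; auto|cong; auto].
    + destruct (IHS2 _ H5) as [A2 [HR1 HE1]].
      exists (Lam k A A2); split; [apply r_lam_bd; auto|cong; auto].
  - inversion HR; subst.
    + destruct (IHS1 _ H5) as [A2 [HR1 HE1]].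
      exists (Pi k A2 M); split; [apply r_pi_ty; auto|cong; auto].
    + destruct (IHS2 _ H5) as [A2 [HR1 HE1]].
      exists (Pi k A A2); split; [apply r_pi_bd; auto|cong; auto].
  - inversion HR.
  - inversion HR.
Qed.

Lemma comm_star sig : forall N N', red_star sig N N' -> forall M, lvl_eq M N ->
  exists M', red_star sig M M' /\ lvl_eq M' N'.
Proof.
  induction 1; intros M0 HM.
  - destruct (comm1 sig M0 x (lvl_eq_S _ _ HM) y H) as [M' [H1 H2]].
    exists M'; split; auto. apply rt_step; auto.
  - exists M0; split; auto. apply rt_refl.
  - destruct (IHclos_refl_trans1 M0 HM) as [M1 [H1 H2]].
    destruct (IHclos_refl_trans2 M1 H2) as [M2 [H3 H4]].
    exists M2; split; auto. eapply rt_trans; eauto.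
Qed.

Lemma conv_join sig (Hs : forall n A M, sig n = Some (A, M) -> closed M) :
  forall M N, conv sig M N ->
  exists M' N', red_star sig M M' /\ red_star sig N N' /\ lvl_eq M' N'.
Proof.
  induction 1.
  - destruct H.
    + exists y, y; repeat split; [apply rt_step; auto|apply rt_refl|apply le_refl].
    + exists x, y; repeat split; [apply rt_refl|apply rt_refl|auto].
  - exists x, x; repeat split; [apply rt_refl|apply rt_refl|apply le_refl].
  - destruct IHclos_refl_sym_trans as [M' [N' [H1 [H2 H3]]]].
    exists N', M'; repeat split; auto. apply le_sym; auto.
  - destruct IHclos_refl_sym_trans1 as [A [B [H1 [H2 H3]]]].
    destruct IHclos_refl_sym_trans2 as [C [D [H4 [H5 H6]]]].
    destruct (confluence sig Hs y B C H2 H4) as [E [H7 H8]].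
    destruct (comm_star sig B E H7 A H3) as [A' [H9 H10]].
    destruct (comm_star sig C E H8 D (le_sym _ _ H6)) as [D' [H11 H12]].
    exists A', D'; repeat split.
    + eapply rt_trans; eauto.
    + eapply rt_trans; eauto.
    + eapply le_trans; [eauto|]. apply le_sym; auto.
Qed.

Theorem mainTheorem3 (sig : signature)
  (sig_finite : exists b, forall n, b <= n -> sig n = None)
  (sig_closed : forall n A M, sig n = Some (A, M) -> closed M) :
  confluent (red1 sig) /\
  (forall M N N', lvl_eq M N -> red1 sig N N' ->
     exists M', red1 sig M M' /\ lvl_eq M' N') /\
  (forall M N, conv sig M N ->
     exists M' N', red_star sig M M' /\ red_star sig N N' /\ lvl_eq M' N').
Proof.
  split; [|split].
  - apply confluence; auto.
  - intros M N N' H1 H2. apply (comm1 sig M N (lvl_eq_S _ _ H1) N' H2).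
  - apply conv_join; auto.
Qed.
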